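(* Let $\sigma=10$, $r=27$, $\beta=8/3$, and for $0<d\le 20$ let $F:\mathbb{R}^2\to\mathbb{R}^2$ be the map \[ F(x,y)=\Bigl(\tfrac{\sigma}{d}\Bigl(x-\tfrac{\beta r x}{\beta+x^2}\Bigr)+2x-y,\; x\Bigr). \] Then for every $0<d\le 20$ the map $F$ has a homoclinic point and infinitely many periodic points.
   Context: The fixed points of $F$ are $(0,0)$ and $\pm(\sqrt{\beta(r-1)},\sqrt{\beta(r-1)})$. A homoclinic point is a point, different from $q$, lying in the intersection of the stable and unstable manifolds $W^s(q)\cap W^u(q)$ of a hyperbolic fixed point $q$ of $F$. Periodic orbits of $F$ of period $n$ correspond to steady states of a ring of $n$ Lorenz oscillators coupled diffusively with strength $d$ in the $x$ variable. *)

(* Defs.v *)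
From Stdlib Require Import Reals Lra List.
From Coquelicot Require Import Coquelicot.
Open Scope R_scope.

Definition sigma : R := 10.
Definition rho : R := 27.
Definition beta : R := 8 / 3.

Definition Fmap (d : R) (p : R * R) : R * R :=
  let x := fst p in let y := snd p in
  (sigma / d * (x - beta * rho * x / (beta + x ^ 2)) + 2 * x - y, x).

Definition iterF (f : R * R -> R * R) (n : nat) (p : R * R) : R * R :=
  Nat.iter n f p.

(* The linear map L : R^2 -> R^2 has a (complex) eigenvalue a + i b of
   modulus 1: its complexification has an eigenvector u + i w <> 0. *)
Definition has_unit_modulus_eigenvalue (L : R * R -> R * R) : Prop :=
  exists a b : R, exists u w : R * R,
    a ^ 2 + b ^ 2 = 1 /\
    (u <> (0, 0) \/ w <> (0, 0)) /\
    L u = (a * fst u - b * fst w, a * snd u - b * snd w) /\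
    L w = (b * fst u + a * fst w, b * snd u + a * snd w).

Definition hyperbolic_fixed_point (f : R * R -> R * R) (q : R * R) : Prop :=
  f q = q /\
  exists L : R * R -> R * R,
    filterdiff f (locally q) L /\ ~ has_unit_modulus_eigenvalue L.

Definition stable_set (f : R * R -> R * R) (q p : R * R) : Prop :=
  filterlim (fun n => iterF f n p) eventually (locally q).

(* Unstable set W^u(q): some backward orbit of p converges to q.
   (For an invertible f, as F is, this is the usual F^{-n}(p) -> q.) *)
Definition unstable_set (f : R * R -> R * R) (q p : R * R) : Prop :=
  exists s : nat -> R * R,
    s 0%nat = p /\ (forall n, f (s (S n)) = s n) /\
    filterlim s eventually (locally q).

Definition homoclinic_point (f : R * R -> R * R) (p : R * R) : Prop :=
  exists q, hyperbolic_fixed_point f q /\ p <> q /\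
    stable_set f q p /\ unstable_set f q p.

Definition periodic_point (f : R * R -> R * R) (p : R * R) : Prop :=
  exists n : nat, (0 < n)%nat /\ iterF f n p = p.

Definition infinitely_many (P : R * R -> Prop) : Prop :=
  forall l : list (R * R), exists p, P p /\ ~ In p l.

(* Main.v *)
Require Import Defs.
From Stdlib Require Import Reals Lra Lia ZArith ClassicalEpsilon List FinFun.
From Coquelicot Require Import Coquelicot.
Require Import Defs.
Open Scope R_scope.

Definition G (d x : R) : R := sigma / d * (x - beta * rho * x / (beta + x ^ 2)) + 2 * x.

Lemma Fmap_eq d x y : Fmap d (x, y) = (G d x - y, x).
Proof. reflexivity. Qed.

Definition X : R := sqrt (208/3).
Definition aa : R := 17/10.

Lemma XX : X * X = 208/3.
Proof. unfold X. apply sqrt_sqrt. lra. Qed.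

Lemma X_bounds : 832/100 < X < 833/100.
Proof.
  assert (H0 : 0 <= X) by (unfold X; apply sqrt_pos).
  pose proof XX. split; nra.
Qed.

Lemma beta_pos x : beta + x ^ 2 > 0.
Proof. unfold beta. nra. Qed.

Lemma G_X d : d <> 0 -> G d X = 2 * X.
Proof.
  intros Hd. unfold G. replace (X ^ 2) with (208/3) by (pose proof XX; simpl; lra).
  unfold beta, rho. field. auto.
Qed.

Definition hh x := x - beta * rho * x / (beta + x ^ 2).

Lemma hh_mono u v : aa <= u -> u <= v -> hh v - hh u >= v - u.
Proof.
  intros H1 H2. unfold hh.
  assert (Hu := beta_pos u). assert (Hv := beta_pos v).
  assert (K : v / (beta + v ^ 2) - u / (beta + u ^ 2) =
              (v - u) * (beta - u * v) / ((beta + u ^ 2) * (beta + v ^ 2))).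
  { field. lra. }
  assert (K2 : (v - u) * (beta - u * v) / ((beta + u ^ 2) * (beta + v ^ 2)) <= 0).
  { unfold Rdiv. apply Rmult_le_0_r.
    - apply Rmult_le_0_l; [lra|]. unfold beta, aa in *. nra.
    - left. apply Rinv_0_lt_compat. nra. }
  assert (E : v - beta * rho * v / (beta + v ^ 2) - (u - beta * rho * u / (beta + u ^ 2))
    = (v - u) - beta * rho * (v / (beta + v ^ 2) - u / (beta + u ^ 2))) by (field; lra).
  rewrite E, K. unfold beta, rho in *. lra.
Qed.

Lemma G_hh d x : G d x = sigma / d * hh x + 2 * x.
Proof. reflexivity. Qed.

Lemma G_mono d u v : 0 < d <= 20 -> aa <= u -> u <= v -> G d v - G d u >= 5/2 * (v - u).
Proof.
  intros Hd H1 H2. rewrite !G_hh.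
  pose proof (hh_mono u v H1 H2).
  assert (Hc : sigma / d >= 1/2).
  { unfold sigma. apply Rle_ge. apply Rmult_le_reg_r with d; [lra|].
    field_simplify; lra. }
  nra.
Qed.

Lemma G_aa d : 0 < d <= 20 -> G d aa <= aa - X.
Proof.
  intros Hd. rewrite G_hh.
  assert (Hc : sigma / d >= 1/2).
  { unfold sigma. apply Rle_ge. apply Rmult_le_reg_r with d; [lra|].
    field_simplify; lra. }
  assert (Hh : hh aa = 17/10 - 36720/1667).
  { unfold hh, aa, beta, rho. field. }
  pose proof X_bounds. rewrite Hh. unfold aa in *. nra.
Qed.

Lemma G_odd d x : d <> 0 -> G d (- x) = - G d x.
Proof.
  intros Hd. unfold G. assert (H := beta_pos x).
  replace ((- x) ^ 2) with (x ^ 2) by ring. field. lra.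
Qed.

Lemma G_cont d : d <> 0 -> continuity (G d).
Proof.
  intros Hd x. apply continuity_pt_filterlim. apply (ex_derive_continuous (G d)).
  unfold G. auto_derive. pose proof (beta_pos x). lra.
Qed.

Definition clamp d S := Rmax (G d aa) (Rmin S (2 * X)).

Lemma clamp_mono d S S' : S <= S' -> clamp d S <= clamp d S'.
Proof. intros H. unfold clamp, Rmax, Rmin. repeat destruct Rle_dec; lra. Qed.

Lemma clamp_id d S : G d aa <= S <= 2 * X -> clamp d S = S.
Proof. intros H. unfold clamp, Rmax, Rmin. repeat destruct Rle_dec; lra. Qed.

Definition phiP d S := epsilon (inhabits 0) (fun z => aa <= z <= X /\ G d z = clamp d S).

Lemma phiP_spec d S : 0 < d <= 20 -> aa <= phiP d S <= X /\ G d (phiP d S) = clamp d S.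
Proof.
  intros Hd. unfold phiP. apply epsilon_spec.
  assert (Hga := G_aa d Hd). assert (HgX := G_X d ltac:(lra)). pose proof X_bounds.
  destruct (IVT_gen (G d) aa X (clamp d S) (G_cont d ltac:(lra))) as [z [Hz1 Hz2]].
  { unfold clamp, Rmax, Rmin in *. unfold aa in *. repeat destruct Rle_dec; lra. }
  exists z. unfold Rmin, Rmax in Hz1. unfold aa in *. destruct Rle_dec; split; lra.
Qed.

Lemma phiP_range d S : 0 < d <= 20 -> aa <= phiP d S <= X.
Proof. intros Hd. apply (phiP_spec d S Hd). Qed.

Lemma phiP_eq d S : 0 < d <= 20 -> G d aa <= S <= 2 * X -> G d (phiP d S) = S.
Proof. intros Hd H. destruct (phiP_spec d S Hd) as [_ E]. rewrite E. apply clamp_id; auto. Qed.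

Lemma phiP_mono d S S' : 0 < d <= 20 -> S <= S' -> phiP d S <= phiP d S'.
Proof.
  intros Hd H. destruct (phiP_spec d S Hd) as [R1 E1]. destruct (phiP_spec d S' Hd) as [R2 E2].
  destruct (Rle_dec (phiP d S) (phiP d S')) as [|n]; auto.
  exfalso. assert (Hlt : phiP d S' < phiP d S) by lra.
  pose proof (G_mono d (phiP d S') (phiP d S) Hd (proj1 R2) (Rlt_le _ _ Hlt)).
  pose proof (clamp_mono d S S' H). lra.
Qed.

Lemma phiP_ge d S z : 0 < d <= 20 -> G d aa <= S <= 2 * X -> aa <= z <= X -> G d z <= S -> z <= phiP d S.
Proof.
  intros Hd HS Hz HG. destruct (phiP_spec d S Hd) as [R1 E1]. rewrite clamp_id in E1; auto.
  destruct (Rle_dec z (phiP d S)) as [|n]; auto.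
  exfalso. pose proof (G_mono d (phiP d S) z Hd (proj1 R1) ltac:(lra)). lra.
Qed.

Definition phiM d S := - phiP d (- S).

Lemma phiM_range d S : 0 < d <= 20 -> - X <= phiM d S <= - aa.
Proof. intros Hd. unfold phiM. pose proof (phiP_range d (- S) Hd). lra. Qed.

Lemma phiM_eq d S : 0 < d <= 20 -> - (2 * X) <= S <= - G d aa -> G d (phiM d S) = S.
Proof.
  intros Hd H. unfold phiM. rewrite G_odd by lra. rewrite phiP_eq; auto; lra.
Qed.

Lemma phiM_mono d S S' : 0 < d <= 20 -> S <= S' -> phiM d S <= phiM d S'.
Proof. intros Hd H. unfold phiM. pose proof (phiP_mono d (- S') (- S) Hd ltac:(lra)). lra. Qed.

Definition T d (s : Z -> bool) (w : Z -> R) (k : Z) : R :=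
  if s k then phiP d (w (k - 1)%Z + w (k + 1)%Z) else phiM d (w (k - 1)%Z + w (k + 1)%Z).

Definition Box (s : Z -> bool) (w : Z -> R) : Prop :=
  forall k, if s k then aa <= w k <= X else - X <= w k <= - aa.

Definition Adm (s : Z -> bool) : Prop :=
  forall k, (s k = true -> s (k - 1)%Z = true \/ s (k + 1)%Z = true) /\
            (s k = false -> s (k - 1)%Z = false \/ s (k + 1)%Z = false).

Lemma T_box d s w : 0 < d <= 20 -> Box s (T d s w).
Proof.
  intros Hd k. unfold T. destruct (s k).
  - apply phiP_range; auto.
  - apply phiM_range; auto.
Qed.

Lemma box_abs s w k : Box s w -> - X <= w k <= X.
Proof. intros H. specialize (H k). pose proof X_bounds. unfold aa in *. destruct (s k); lra. Qed.

Lemma sum_rangeP d s w k : 0 < d <= 20 -> Adm s -> Box s w -> s k = true ->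
  G d aa <= w (k - 1)%Z + w (k + 1)%Z <= 2 * X.
Proof.
  intros Hd HA HB Hk. pose proof (G_aa d Hd).
  pose proof (box_abs s w (k-1)%Z HB). pose proof (box_abs s w (k+1)%Z HB).
  destruct (proj1 (HA k) Hk) as [E|E].
  - pose proof (HB (k-1)%Z) as B. rewrite E in B. lra.
  - pose proof (HB (k+1)%Z) as B. rewrite E in B. lra.
Qed.

Lemma sum_rangeM d s w k : 0 < d <= 20 -> Adm s -> Box s w -> s k = false ->
  - (2 * X) <= w (k - 1)%Z + w (k + 1)%Z <= - G d aa.
Proof.
  intros Hd HA HB Hk. pose proof (G_aa d Hd).
  pose proof (box_abs s w (k-1)%Z HB). pose proof (box_abs s w (k+1)%Z HB).
  destruct (proj2 (HA k) Hk) as [E|E].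
  - pose proof (HB (k-1)%Z) as B. rewrite E in B. lra.
  - pose proof (HB (k+1)%Z) as B. rewrite E in B. lra.
Qed.

Lemma T_eq d s w k : 0 < d <= 20 -> Adm s -> Box s w ->
  G d (T d s w k) = w (k - 1)%Z + w (k + 1)%Z.
Proof.
  intros Hd HA HB. unfold T. destruct (s k) eqn:E.
  - apply phiP_eq; auto. apply (sum_rangeP d s w k); auto.
  - apply phiM_eq; auto. apply (sum_rangeM d s w k); auto.
Qed.

Lemma T_mono d s w w' : 0 < d <= 20 -> (forall k, w k <= w' k) -> forall k, T d s w k <= T d s w' k.
Proof.
  intros Hd H k. unfold T. pose proof (H (k-1)%Z). pose proof (H (k+1)%Z).
  destruct (s k).
  - apply phiP_mono; auto; lra.
  - apply phiM_mono; auto; lra.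
Qed.

Definition U d s w0 (n : nat) : Z -> R := Nat.iter n (T d s) w0.

Lemma U_S d s w0 n : U d s w0 (S n) = T d s (U d s w0 n).
Proof. reflexivity. Qed.

Lemma U_box d s w0 n : 0 < d <= 20 -> Box s w0 -> Box s (U d s w0 n).
Proof. intros Hd H. destruct n; [exact H|]. rewrite U_S. apply T_box; auto. Qed.

Lemma U_incr d s w0 : 0 < d <= 20 -> (forall k, w0 k <= T d s w0 k) ->
  forall n k, U d s w0 n k <= U d s w0 (S n) k.
Proof.
  intros Hd H0 n. induction n as [|n IH].
  - exact H0.
  - intros k. rewrite (U_S d s w0 (S n)), (U_S d s w0 n). apply T_mono; auto.
Qed.

Lemma U_ge d s w0 : 0 < d <= 20 -> (forall k, w0 k <= T d s w0 k) ->
  forall n k, w0 k <= U d s w0 n k.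
Proof.
  intros Hd H0 n. induction n as [|n IH]; intros k.
  - simpl. lra.
  - pose proof (U_incr d s w0 Hd H0 n k). specialize (IH k). lra.
Qed.

Lemma U_per d s w0 (P : Z) : (forall k, s (k + P)%Z = s k) -> (forall k, w0 (k + P)%Z = w0 k) ->
  forall n k, U d s w0 n (k + P)%Z = U d s w0 n k.
Proof.
  intros Hs Hw n. induction n as [|n IH]; intros k.
  - apply Hw.
  - rewrite !U_S. unfold T. rewrite Hs.
    replace (k + P - 1)%Z with ((k - 1) + P)%Z by lia.
    replace (k + P + 1)%Z with ((k + 1) + P)%Z by lia.
    rewrite !IH. reflexivity.
Qed.

Lemma lim_bounds (u : nat -> R) lo hi (l : R) : (forall n, lo <= u n <= hi) -> is_lim_seq u l -> lo <= l <= hi.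
Proof.
  intros H Hl. split.
  - assert (K := is_lim_seq_le (fun _ => lo) u lo l (fun n => proj1 (H n)) (is_lim_seq_const lo) Hl).
    simpl in K. exact K.
  - assert (K := is_lim_seq_le u (fun _ => hi) l hi (fun n => proj2 (H n)) Hl (is_lim_seq_const hi)).
    simpl in K. exact K.
Qed.

Lemma construct d s w0 : 0 < d <= 20 -> Adm s -> Box s w0 -> (forall k, w0 k <= T d s w0 k) ->
  exists x : Z -> R,
    (forall k, G d (x k) = x (k - 1)%Z + x (k + 1)%Z) /\ Box s x /\ (forall k, w0 k <= x k) /\
    (forall P, (forall k, s (k + P)%Z = s k) -> (forall k, w0 (k + P)%Z = w0 k) -> forall k, x (k + P)%Z = x k).
Proof.
  intros Hd HA HB H0.
  set (x := fun k => real (Lim_seq (fun n => U d s w0 n k))).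
  assert (Hlim : forall k, is_lim_seq (fun n => U d s w0 n k) (x k)).
  { intros k.
    assert (Hex : ex_finite_lim_seq (fun n => U d s w0 n k)).
    { apply ex_finite_lim_seq_incr with X.
      - intros n. apply U_incr; auto.
      - intros n. apply (box_abs s _ k (U_box d s w0 n Hd HB)). }
    destruct Hex as [l Hl]. unfold x. rewrite (is_lim_seq_unique _ _ Hl). simpl. exact Hl. }
  exists x. split; [|split; [|split]].
  - intros k.
    assert (L1 : is_lim_seq (fun n => G d (U d s w0 (S n) k)) (G d (x k))).
    { apply is_lim_seq_continuous. apply G_cont; lra.
      apply (is_lim_seq_incr_1 (fun n => U d s w0 n k)). apply Hlim. }
    assert (L2 : is_lim_seq (fun n => G d (U d s w0 (S n) k)) (x (k - 1)%Z + x (k + 1)%Z)).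
    { apply is_lim_seq_ext with (fun n => U d s w0 n (k - 1)%Z + U d s w0 n (k + 1)%Z).
      - intros n. rewrite U_S. symmetry. apply T_eq; auto. apply U_box; auto.
      - apply is_lim_seq_plus'; apply Hlim. }
    pose proof (is_lim_seq_unique _ _ L1) as E1. pose proof (is_lim_seq_unique _ _ L2) as E2.
    rewrite E1 in E2. injection E2. auto.
  - intros k. pose proof (Hlim k) as Hk. pose proof (fun n => U_box d s w0 n Hd HB k) as HBn.
    destruct (s k).
    + apply (lim_bounds (fun n => U d s w0 n k) aa X _ HBn Hk).
    + apply (lim_bounds (fun n => U d s w0 n k) (- X) (- aa) _ HBn Hk).
  - intros k. pose proof (Hlim k) as Hk.
    apply (lim_bounds (fun n => U d s w0 n k) (w0 k) X _); auto. intros n. split.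
    + apply U_ge; auto.
    + apply (box_abs s _ k (U_box d s w0 n Hd HB)).
  - intros P Hs Hw k. unfold x. f_equal. apply Lim_seq_ext. intros n. apply U_per; auto.
Qed.

Lemma orbit d (x : Z -> R) : (forall k, G d (x k) = x (k - 1)%Z + x (k + 1)%Z) ->
  forall n k, iterF (Fmap d) n (x k, x (k - 1)%Z) = (x (k + Z.of_nat n)%Z, x (k + Z.of_nat n - 1)%Z).
Proof.
  intros Hx n. induction n as [|n IH]; intros k.
  - simpl. rewrite Z.add_0_r. reflexivity.
  - change (iterF (Fmap d) (S n) (x k, x (k - 1)%Z)) with (Fmap d (iterF (Fmap d) n (x k, x (k - 1)%Z))).
    rewrite IH, Fmap_eq, Hx.
    replace (k + Z.of_nat (S n))%Z with (k + Z.of_nat n + 1)%Z by lia.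
    replace (k + Z.of_nat n + 1 - 1)%Z with (k + Z.of_nat n)%Z by lia.
    f_equal. ring.
Qed.

Lemma pigeon {A : Type} (f : nat -> A) : Injective f -> forall l : list A, exists m, ~ In (f m) l.
Proof.
  intros Hf l. apply Classical_Pred_Type.not_all_not_ex. intros H.
  assert (Hin : incl (map f (seq 0 (S (length l)))) l).
  { intros y Hy. apply in_map_iff in Hy. destruct Hy as [m [<- _]].
    specialize (H m). apply Classical_Prop.NNPP in H. exact H. }
  assert (Hnd : NoDup (map f (seq 0 (S (length l))))).
  { apply Injective_map_NoDup; auto. apply seq_NoDup. }
  pose proof (NoDup_incl_length Hnd Hin) as Hlen.
  rewrite length_map, length_seq in Hlen. lia.
Qed.

Definition LL (m : nat) : Z := (Z.of_nat m + 2)%Z.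
Definition sm (m : nat) (k : Z) : bool := Z.ltb (k mod (2 * LL m)) (LL m).

Lemma mod_val n k q r : (0 <= r < n)%Z -> k = (n * q + r)%Z -> (k mod n)%Z = r.
Proof. intros H1 H2. symmetry. apply (Z.mod_unique k n q r); auto. Qed.

Lemma sm_adm m : Adm (sm m).
Proof.
  intros k. unfold sm. set (L := LL m). set (n := (2 * L)%Z).
  assert (HL : (2 <= L)%Z) by (unfold L, LL; lia).
  assert (Hn : (0 < n)%Z) by (unfold n; lia).
  pose proof (Z.mod_pos_bound k n Hn) as Hr.
  pose proof (Z_div_mod_eq_full k n) as Hk.
  set (r := (k mod n)%Z) in *. set (q := (k / n)%Z) in *.
  split; intros Hs.
  - apply Z.ltb_lt in Hs.
    destruct (Z.eq_dec r 0) as [E|E].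
    + right. apply Z.ltb_lt. rewrite (mod_val n (k+1) q 1); lia.
    + left. apply Z.ltb_lt. rewrite (mod_val n (k-1) q (r - 1)); lia.
  - apply Z.ltb_ge in Hs.
    destruct (Z.eq_dec r L) as [E|E].
    + right. apply Z.ltb_ge. rewrite (mod_val n (k+1) q (L + 1)); unfold n in *; lia.
    + left. apply Z.ltb_ge. rewrite (mod_val n (k-1) q (r - 1)); lia.
Qed.

Lemma sm_per m k : sm m (k + 2 * LL m)%Z = sm m k.
Proof.
  unfold sm. replace (k + 2 * LL m)%Z with (k + 1 * (2 * LL m))%Z by lia.
  rewrite Z_mod_plus_full. reflexivity.
Qed.

Lemma sm_true m k : (0 <= k < LL m)%Z -> sm m k = true.
Proof.
  intros H. unfold sm. apply Z.ltb_lt. rewrite Z.mod_small; lia.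
Qed.

Lemma sm_L m : sm m (LL m) = false.
Proof.
  unfold sm. apply Z.ltb_ge. rewrite Z.mod_small; unfold LL; lia.
Qed.

Definition Qm d (m : nat) (p : R * R) : Prop :=
  periodic_point (Fmap d) p /\ (forall j, (j <= m)%nat -> 0 < fst (iterF (Fmap d) j p)) /\
  fst (iterF (Fmap d) (S m) p) < 0.

Lemma Qm_exists d m : 0 < d <= 20 -> exists p, Qm d m p.
Proof.
  intros Hd.
  set (w0 := fun k => if sm m k then aa else - X).
  assert (HB : Box (sm m) w0).
  { intros k. unfold w0. pose proof X_bounds. unfold aa in *. destruct (sm m k); lra. }
  assert (H0 : forall k, w0 k <= T d (sm m) w0 k).
  { intros k. pose proof (T_box d (sm m) w0 Hd k) as B.
    assert (E : w0 k = if sm m k then aa else - X) by reflexivity. rewrite E.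
    pose proof X_bounds. unfold aa in *. destruct (sm m k); lra. }
  destruct (construct d (sm m) w0 Hd (sm_adm m) HB H0) as [x [Hx [HBx [_ Hper]]]].
  assert (Hp : forall k, x (k + 2 * LL m)%Z = x k).
  { apply Hper. apply sm_per. intros k. unfold w0. rewrite sm_per. reflexivity. }
  pose proof (orbit d x Hx) as Horb.
  exists (x 1%Z, x 0%Z). split; [|split].
  - exists (Z.to_nat (2 * LL m)). split. { unfold LL. lia. }
    replace (x 0%Z) with (x (1 - 1)%Z) by reflexivity. rewrite Horb.
    rewrite Z2Nat.id by (unfold LL; lia).
    replace (1 + 2 * LL m - 1)%Z with (0 + 2 * LL m)%Z by lia.
    rewrite !Hp. reflexivity.
  - intros j Hj. replace (x 0%Z) with (x (1 - 1)%Z) by reflexivity. rewrite Horb. cbv beta iota delta [fst].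
    pose proof (HBx (1 + Z.of_nat j)%Z) as B. rewrite sm_true in B by (unfold LL; lia).
    unfold aa in B. lra.
  - replace (x 0%Z) with (x (1 - 1)%Z) by reflexivity. rewrite Horb. cbv beta iota delta [fst].
    replace (1 + Z.of_nat (S m))%Z with (LL m) by (unfold LL; lia).
    pose proof (HBx (LL m)) as B. rewrite sm_L in B. unfold aa in B. lra.
Qed.

Lemma infinitely d : 0 < d <= 20 -> infinitely_many (periodic_point (Fmap d)).
Proof.
  intros Hd l.
  set (f := fun m => epsilon (inhabits (0, 0)) (Qm d m)).
  assert (Hf : forall m, Qm d m (f m)).
  { intros m. apply epsilon_spec. apply Qm_exists; auto. }
  assert (Hinj : Injective f).
  { assert (K : forall m m', (m < m')%nat -> f m <> f m').
    { intros m m' Hlt E. destruct (Hf m) as [_ [_ N]]. destruct (Hf m') as [_ [P _]].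
      specialize (P (S m) ltac:(lia)). rewrite E in N. lra. }
    intros m m' E. destruct (Nat.lt_trichotomy m m') as [H|[H|H]]; auto.
    - exfalso. apply (K m m' H E).
    - exfalso. apply (K m' m H). auto. }
  destruct (pigeon f Hinj l) as [m Hm]. exists (f m). split; auto.
  apply (Hf m).
Qed.

Lemma pair_lim (u v : nat -> R) (l1 l2 : R) : is_lim_seq u l1 -> is_lim_seq v l2 ->
  filterlim (fun n => (u n, v n)) eventually (locally (l1, l2)).
Proof.
  intros Hu Hv. apply filterlim_locally. intros eps.
  pose proof (proj1 (filterlim_locally u l1) Hu eps) as A.
  pose proof (proj1 (filterlim_locally v l2) Hv eps) as B.
  generalize (filter_and _ _ A B). apply filter_imp. intros n [H1 H2]. split; auto.
Qed.

Lemma no_unit t : t > 2 -> ~ has_unit_modulus_eigenvalue (fun p : R * R => (t * fst p - snd p, fst p)).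
Proof.
  intros Ht [a [b [[u1 u2] [[w1 w2] [Hab [Hnz [E1 E2]]]]]]].
  simpl in E1, E2. injection E1 as E1a E1b. injection E2 as E2a E2b.
  subst u1 w1.
  set (P := u2 * u2 + w2 * w2).
  assert (K1 : P * (t * a - 1 - a * a + b * b) = 0).
  { transitivity (u2 * ((t * (a * u2 - b * w2) - u2) - (a * (a * u2 - b * w2) - b * (b * u2 + a * w2)))
      + w2 * ((t * (b * u2 + a * w2) - w2) - (b * (a * u2 - b * w2) + a * (b * u2 + a * w2)))).
    { unfold P. ring. }
    rewrite E1a, E2a. ring. }
  assert (K2 : P * (b * (t - 2 * a)) = 0).
  { transitivity (- (w2 * ((t * (a * u2 - b * w2) - u2) - (a * (a * u2 - b * w2) - b * (b * u2 + a * w2)))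
      - u2 * ((t * (b * u2 + a * w2) - w2) - (b * (a * u2 - b * w2) + a * (b * u2 + a * w2))))).
    { unfold P. ring. }
    rewrite E1a, E2a. ring. }
  assert (Ha : a * a <= 1) by nra.
  assert (HP : P = 0).
  { destruct (Req_dec P 0) as [|HP]; auto. exfalso.
    apply Rmult_integral in K2. destruct K2 as [|K2]; [contradiction|].
    apply Rmult_integral in K2. destruct K2 as [Hb|Hb].
    - subst b. apply Rmult_integral in K1. destruct K1 as [|K1]; [contradiction|].
      assert (a * a = 1) by nra. nra.
    - nra. }
  assert (u2 = 0) by (unfold P in HP; nra). assert (w2 = 0) by (unfold P in HP; nra).
  subst u2 w2. destruct Hnz as [H|H]; apply H; f_equal; ring.
Qed.

Lemma hyper d : 0 < d <= 20 -> hyperbolic_fixed_point (Fmap d) (X, X).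
Proof.
  intros Hd. split.
  { rewrite Fmap_eq, G_X by lra. f_equal. ring. }
  set (t := 10 / d * (52 / 27) + 2).
  assert (Hder : is_derive (G d) X t).
  { assert (Hg : is_derive (G d) X (sigma / d * (1 - beta * rho * (beta - X ^ 2) / (beta + X ^ 2) ^ 2) + 2)).
    { unfold G. pose proof (beta_pos X). auto_derive.
      - simpl in *. lra.
      - simpl in *. field. split; lra. }
    replace t with (sigma / d * (1 - beta * rho * (beta - X ^ 2) / (beta + X ^ 2) ^ 2) + 2); auto.
    unfold t. replace (X ^ 2) with (208/3) by (pose proof XX; simpl; lra).
    unfold sigma, beta, rho. field. lra. }
  exists (fun p : R * R => (t * fst p - snd p, fst p)). split.
  - assert (H1 : filterdiff (fun p : R * R => G d (fst p)) (locally (X, X)) (fun p : R * R => scal (fst p) t)).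
    { apply (filterdiff_comp' (fun p : R * R => fst p) (G d) (X, X) (fun p : R * R => fst p) (fun y => scal y t)).
      - apply filterdiff_linear, is_linear_fst.
      - exact Hder. }
    assert (H2 : filterdiff (fun p : R * R => snd p) (locally (X, X)) (fun p : R * R => snd p)).
    { apply filterdiff_linear, is_linear_snd. }
    assert (H3 : filterdiff (fun p : R * R => minus (G d (fst p)) (snd p)) (locally (X, X))
                   (fun p : R * R => minus (scal (fst p) t) (snd p))).
    { apply (filterdiff_comp'_2 (fun p : R * R => G d (fst p)) (fun p : R * R => snd p) minus (X, X)
              (fun p : R * R => scal (fst p) t) (fun p : R * R => snd p) minus H1 H2).
      apply filterdiff_minus. }
    assert (H5 : filterdiff (fun p : R * R => (minus (G d (fst p)) (snd p), fst p)) (locally (X, X))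
                   (fun p : R * R => (minus (scal (fst p) t) (snd p), fst p))).
    { apply (filterdiff_comp'_2 (fun p : R * R => minus (G d (fst p)) (snd p)) (fun p : R * R => fst p)
              (fun u v : R => (u, v)) (X, X)
              (fun p : R * R => minus (scal (fst p) t) (snd p)) (fun p : R * R => fst p)
              (fun u v : R => (u, v)) H3).
      - apply filterdiff_linear, is_linear_fst.
      - apply filterdiff_linear. apply is_linear_prod; [apply is_linear_fst|apply is_linear_snd]. }
    eapply filterdiff_ext_lin.
    + eapply filterdiff_ext; [|exact H5].
      intros [y1 y2]. reflexivity.
    + intros [y1 y2]. simpl. f_equal. change (y1 * t - y2 = t * y1 - y2). ring.
  - apply no_unit. unfold t.
    assert (10 / d > 0) by (apply Rdiv_lt_0_compat; lra). nra.
Qed.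

Definition s0 (k : Z) : bool := negb (Z.eqb k 0 || Z.eqb k 1).

Lemma s0_true k : k <> 0%Z -> k <> 1%Z -> s0 k = true.
Proof. intros H1 H2. unfold s0. apply Z.eqb_neq in H1. apply Z.eqb_neq in H2. rewrite H1, H2. reflexivity. Qed.

Lemma s0_0 : s0 0 = false. Proof. reflexivity. Qed.
Lemma s0_1 : s0 1 = false. Proof. reflexivity. Qed.

Lemma s0_adm : Adm s0.
Proof.
  intros k. split; intros H.
  - destruct (Z.eq_dec k 0) as [->|H0]; [rewrite s0_0 in H; discriminate|].
    destruct (Z.eq_dec k 1) as [->|H1]; [rewrite s0_1 in H; discriminate|].
    destruct (Z_le_gt_dec 2 k).
    + right. apply s0_true; lia.
    + left. apply s0_true; lia.
  - destruct (Z.eq_dec k 0) as [->|H0]; [right; reflexivity|].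
    destruct (Z.eq_dec k 1) as [->|H1]; [left; reflexivity|].
    rewrite s0_true in H by auto. discriminate.
Qed.

Definition EE (j : Z) : R := (X - aa) * (/ 2) ^ (Z.to_nat j).

Lemma Xaa : 0 < X - aa.
Proof. pose proof X_bounds. unfold aa. lra. Qed.

Lemma half_pow_pos n : 0 < (/ 2) ^ n.
Proof. apply pow_lt. lra. Qed.

Lemma half_pow_le m k : (/ 2) ^ (m + k) <= (/ 2) ^ m.
Proof.
  induction k as [|k IH].
  - rewrite Nat.add_0_r. lra.
  - rewrite Nat.add_succ_r. simpl. pose proof (half_pow_pos (m + k)). lra.
Qed.

Lemma EE_bounds j : 0 <= EE j <= X - aa.
Proof.
  unfold EE. pose proof Xaa. pose proof (half_pow_pos (Z.to_nat j)).
  pose proof (half_pow_le 0 (Z.to_nat j)). simpl in *. split; nra.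
Qed.

Lemma EE_0 : EE 0 = X - aa.
Proof. unfold EE. simpl. ring. Qed.

Lemma EE_1 : EE 1 = (X - aa) / 2.
Proof. unfold EE. simpl. field. Qed.

Lemma EE_rec j : (1 <= j)%Z -> EE (j - 1) + EE (j + 1) = 5 / 2 * EE j.
Proof.
  intros Hj. unfold EE.
  replace (Z.to_nat (j - 1)) with (pred (Z.to_nat j)) by lia.
  replace (Z.to_nat (j + 1)) with (S (Z.to_nat j)) by lia.
  destruct (Z.to_nat j) as [|n] eqn:E; [lia|].
  simpl. field.
Qed.

Lemma EE_le (j : Z) (n : nat) : (2 <= n)%nat -> (Z.of_nat n - 2 <= j)%Z -> EE j <= 4 * (X - aa) * (/ 2) ^ n.
Proof.
  intros Hn Hj. unfold EE. pose proof Xaa.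
  set (m := (n - 2)%nat).
  assert (A1 : (/ 2) ^ (Z.to_nat j) <= (/ 2) ^ m).
  { replace (Z.to_nat j) with (m + (Z.to_nat j - m))%nat by (unfold m; lia). apply half_pow_le. }
  assert (A2 : (/ 2) ^ n = (/ 2) ^ m * / 4).
  { replace n with (m + 2)%nat by (unfold m; lia). rewrite pow_add. simpl. field. }
  rewrite A2. pose proof (half_pow_pos m). nra.
Qed.

Definition wh (k : Z) : R :=
  if (2 <=? k)%Z then X - EE (k - 2) else if (k <=? -1)%Z then X - EE (-1 - k) else - X.

Lemma wh_pos k : (2 <= k)%Z -> wh k = X - EE (k - 2).
Proof. intros H. unfold wh. destruct (Z.leb_spec 2 k); [reflexivity|lia]. Qed.

Lemma wh_neg k : (k <= -1)%Z -> wh k = X - EE (-1 - k).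
Proof. intros H. unfold wh. destruct (Z.leb_spec 2 k); [lia|]. destruct (Z.leb_spec k (-1)); [reflexivity|lia]. Qed.

Lemma wh_mid k : (0 <= k <= 1)%Z -> wh k = - X.
Proof. intros H. unfold wh. destruct (Z.leb_spec 2 k); [lia|]. destruct (Z.leb_spec k (-1)); [lia|reflexivity]. Qed.

Lemma wh_box : Box s0 wh.
Proof.
  intros k. pose proof X_bounds. pose proof Xaa.
  destruct (Z_le_gt_dec 2 k).
  - rewrite s0_true by lia. rewrite wh_pos by lia. pose proof (EE_bounds (k - 2)). lra.
  - destruct (Z_le_gt_dec k (-1)).
    + rewrite s0_true by lia. rewrite wh_neg by lia. pose proof (EE_bounds (-1 - k)). lra.
    + assert (k = 0 \/ k = 1)%Z as [->| ->] by lia.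
      * rewrite s0_0, wh_mid by lia. unfold aa in *. lra.
      * rewrite s0_1, wh_mid by lia. unfold aa in *. lra.
Qed.

Lemma G_low d e : 0 < d <= 20 -> 0 <= e <= X - aa -> G d (X - e) <= 2 * X - 5 / 2 * e.
Proof.
  intros Hd He. pose proof (G_mono d (X - e) X Hd ltac:(lra) ltac:(lra)).
  rewrite G_X in H by lra. lra.
Qed.

Lemma wh_sub d : 0 < d <= 20 -> forall k, wh k <= T d s0 wh k.
Proof.
  intros Hd k. pose proof X_bounds. pose proof Xaa. pose proof (G_aa d Hd).
  destruct (Z.eq_dec k 0) as [->|Hk0].
  { pose proof (T_box d s0 wh Hd 0%Z) as B. rewrite s0_0 in B. rewrite wh_mid by lia. lra. }
  destruct (Z.eq_dec k 1) as [->|Hk1].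
  { pose proof (T_box d s0 wh Hd 1%Z) as B. rewrite s0_1 in B. rewrite wh_mid by lia. lra. }
  assert (Hs : s0 k = true) by (apply s0_true; auto).
  unfold T. rewrite Hs. apply phiP_ge; auto.
  - apply (sum_rangeP d s0 wh k Hd s0_adm wh_box Hs).
  - pose proof (wh_box k) as B. rewrite Hs in B. exact B.
  - destruct (Z_le_gt_dec 2 k).
    + destruct (Z.eq_dec k 2) as [->|H2].
      * rewrite wh_pos, wh_mid, wh_pos by lia. simpl (2 - 2)%Z. simpl (2 + 1 - 2)%Z.
        rewrite EE_0, EE_1. replace (X - (X - aa)) with aa by ring. lra.
      * rewrite !wh_pos by lia.
        pose proof (EE_rec (k - 2) ltac:(lia)) as R.
        replace (k - 2 - 1)%Z with (k - 1 - 2)%Z in R by lia.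
        replace (k - 2 + 1)%Z with (k + 1 - 2)%Z in R by lia.
        pose proof (G_low d (EE (k - 2)) Hd (EE_bounds _)). lra.
    + destruct (Z.eq_dec k (-1)) as [->|H2].
      * rewrite wh_neg, wh_neg, wh_mid by lia. simpl (-1 - -1)%Z. simpl (-1 - (-1 - 1))%Z.
        rewrite EE_0, EE_1. replace (X - (X - aa)) with aa by ring. lra.
      * rewrite !wh_neg by lia.
        pose proof (EE_rec (-1 - k) ltac:(lia)) as R.
        replace (-1 - k - 1)%Z with (-1 - (k + 1))%Z in R by lia.
        replace (-1 - k + 1)%Z with (-1 - (k - 1))%Z in R by lia.
        pose proof (G_low d (EE (-1 - k)) Hd (EE_bounds _)). lra.
Qed.

Lemma conv (v : nat -> R) : (forall n, (2 <= n)%nat -> X - 4 * (X - aa) * (/ 2) ^ n <= v n <= X) ->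
  is_lim_seq v X.
Proof.
  intros H.
  assert (L : is_lim_seq (fun n => X - 4 * (X - aa) * (/ 2) ^ n) (X - 4 * (X - aa) * 0)).
  { apply (is_lim_seq_minus' (fun _ => X) (fun n => 4 * (X - aa) * (/ 2) ^ n)).
    - apply is_lim_seq_const.
    - apply (is_lim_seq_scal_l (fun n => (/ 2) ^ n) (4 * (X - aa)) 0).
      apply is_lim_seq_geom. rewrite Rabs_pos_eq; lra. }
  replace (X - 4 * (X - aa) * 0) with X in L by ring.
  apply (is_lim_seq_le_le_loc (fun n => X - 4 * (X - aa) * (/ 2) ^ n) v (fun _ => X) X); auto.
  - exists 2%nat. intros n Hn. apply H. auto.
  - apply is_lim_seq_const.
Qed.

Lemma homoclinic d : 0 < d <= 20 -> exists p, homoclinic_point (Fmap d) p.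
Proof.
  intros Hd.
  destruct (construct d s0 wh Hd s0_adm wh_box (wh_sub d Hd)) as [x [Hx [HBx [Hge _]]]].
  pose proof (orbit d x Hx) as Horb.
  assert (Hup : forall k, k <> 0%Z -> k <> 1%Z -> x k <= X).
  { intros k H0 H1. pose proof (HBx k) as B. rewrite s0_true in B by auto. lra. }
  assert (Hpos : forall k n, (2 <= n)%nat -> (Z.of_nat n <= k)%Z -> X - 4 * (X - aa) * (/ 2) ^ n <= x k <= X).
  { intros k n Hn Hk. split; [|apply Hup; lia].
    pose proof (Hge k) as W. rewrite wh_pos in W by lia.
    pose proof (EE_le (k - 2) n Hn ltac:(lia)). lra. }
  assert (Hneg : forall k n, (2 <= n)%nat -> (k <= 1 - Z.of_nat n)%Z -> X - 4 * (X - aa) * (/ 2) ^ n <= x k <= X).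
  { intros k n Hn Hk. split; [|apply Hup; lia].
    pose proof (Hge k) as W. rewrite wh_neg in W by lia.
    pose proof (EE_le (-1 - k) n Hn ltac:(lia)). lra. }
  exists (x 1%Z, x 0%Z). exists (X, X). split; [apply hyper; auto|split; [|split]].
  - intros E. injection E as E1 _. pose proof (HBx 1%Z) as B. rewrite s0_1 in B.
    pose proof X_bounds. unfold aa in B. lra.
  - unfold stable_set.
    apply filterlim_ext with (fun n => (x (1 + Z.of_nat n)%Z, x (1 + Z.of_nat n - 1)%Z)).
    { intros n. rewrite <- Horb. reflexivity. }
    apply pair_lim; apply conv; intros n Hn; apply Hpos; auto; lia.
  - exists (fun n => (x (1 - Z.of_nat n)%Z, x (- Z.of_nat n)%Z)). split; [|split].
    + reflexivity.
    + intros n. rewrite Fmap_eq, Hx. f_equal.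
      * replace (1 - Z.of_nat (S n) + 1)%Z with (1 - Z.of_nat n)%Z by lia.
        replace (1 - Z.of_nat (S n) - 1)%Z with (- Z.of_nat (S n))%Z by lia.
        ring.
      * f_equal. lia.
    + apply pair_lim; apply conv; intros n Hn; apply Hneg; auto; lia.
Qed.

Theorem theorem4p3 : forall d : R, 0 < d <= 20 ->
  (exists p, homoclinic_point (Fmap d) p) /\
  infinitely_many (periodic_point (Fmap d)).
Proof.
  intros d Hd. split.
  - apply homoclinic; auto.
  - apply infinitely; auto.
Qed.
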